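(* Let $G$ be a wheel-like brick and let $u_h$ be a hub of $G$. Then every multiple edge of $G$ is incident with $u_h$.
   Context: Graphs are finite and loopless; multiple edges allowed (an edge is a multiple edge if some other edge has the same two ends). A graph is matching covered if it is connected, has at least two vertices, and every edge lies in a perfect matching. A cut (edges with exactly one end in a vertex set $X$) is tight if every perfect matching contains exactly one of its edges, trivial if one side has one vertex. A brick is a nonbipartite matching covered graph all of whose tight cuts are trivial. An edge $e$ is removable if $G-e$ is matching covered; a pair $\{e,f\}$ is a removable doubleton if $G-e-f$ is matching covered but neither $G-e$ nor $G-f$ is; these are the removable classes. A brick $G$ is wheel-like if it has a vertex $h$, called a hub, such that every removable class contains an edge incident with $h$. *)

(* Defs.v *)
(* Spanning subgraphs (such as G - e, G - e - f) are
   represented by the set D : {set E} of edges kept; G itself is D = setT. *)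
From mathcomp Require Import all_boot.
Set Implicit Arguments. Unset Strict Implicit. Unset Printing Implicit Defensive.

Section Graphs.
Variables (V E : finType) (src dst : E -> V).

Definition incident (e : E) (v : V) : bool := (src e == v) || (dst e == v).

Definition adj (D : {set E}) : rel V :=
  fun x y => [exists e in D, ((src e == x) && (dst e == y)) ||
                             ((src e == y) && (dst e == x))].

Definition connectedG (D : {set E}) : Prop := forall x y : V, connect (adj D) x y.

Definition perfect_matching (D M : {set E}) : Prop :=
  M \subset D /\ forall v : V, #|[set e in M | incident e v]| = 1.

Definition matching_covered (D : {set E}) : Prop :=
  connectedG D /\ 2 <= #|V| /\
  forall e, e \in D -> exists M, perfect_matching D M /\ e \in M.

Definition cut (D : {set E}) (X : {set V}) : {set E} :=
  [set e in D | (src e \in X) != (dst e \in X)].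

Definition tight_cut (D : {set E}) (X : {set V}) : Prop :=
  forall M, perfect_matching D M -> #|M :&: cut D X| = 1.

Definition trivial_cut (X : {set V}) : Prop := #|X| = 1 \/ #|~: X| = 1.

Definition bipartite (D : {set E}) : Prop :=
  exists X : {set V}, forall e, e \in D -> (src e \in X) != (dst e \in X).

Definition brick (D : {set E}) : Prop :=
  ~ bipartite D /\ matching_covered D /\
  forall X : {set V}, tight_cut D X -> trivial_cut X.

Definition removable_edge (D : {set E}) (e : E) : Prop :=
  e \in D /\ matching_covered (D :\ e).

Definition removable_doubleton (D : {set E}) (e f : E) : Prop :=
  e \in D /\ f \in D /\ e != f /\
  matching_covered (D :\ e :\ f) /\
  ~ matching_covered (D :\ e) /\ ~ matching_covered (D :\ f).

Definition removable_class (D : {set E}) (C : {set E}) : Prop :=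
  (exists e, C = [set e] /\ removable_edge D e) \/
  (exists e f, C = [set e; f] /\ removable_doubleton D e f).

Definition is_hub (D : {set E}) (h : V) : Prop :=
  forall C, removable_class D C -> exists2 e, e \in C & incident e h.

Definition wheel_like (D : {set E}) : Prop :=
  brick D /\ exists h, is_hub D h.

Definition multiple_edge (D : {set E}) (e : E) : Prop :=
  e \in D /\ exists2 f, f \in D &
    (f != e) && [|| (src f == src e) && (dst f == dst e)
                  | (src f == dst e) && (dst f == src e)].

End Graphs.

(* Main.v *)
Require Import Defs.
From mathcomp Require Import all_boot.
From mathcomp Require Import fingroup perm.
Set Implicit Arguments. Unset Strict Implicit. Unset Printing Implicit Defensive.

Section S.
Variables (V E : finType) (src dst : E -> V).

Lemma par_removable (e f : E) :
  matching_covered src dst [set: E] -> f != e ->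
  (src f == src e) && (dst f == dst e) || (src f == dst e) && (dst f == src e) ->
  removable_edge src dst [set: E] e.
Proof.
move=> [conn [card2 cov]] fe hpar.
have inc_ef : forall v, incident src dst f v = incident src dst e v.
  move=> v; rewrite /incident.
  by case/orP: hpar => /andP [/eqP -> /eqP ->] //; rewrite orbC.
split; first by rewrite inE.
have hconn : connectedG src dst ([set: E] :\ e).
  move=> x y; apply: connect_sub (conn x y) => a b /existsP [g /andP [_ Hg]].
  apply: connect1; case: (eqVneq g e) => [gE|gne].
    subst g; apply/existsP; exists f; rewrite !inE fe /=.
    case/orP: Hg => /andP [/eqP <- /eqP <-];
    by case/orP: hpar => /andP [/eqP -> /eqP ->]; rewrite ?eqxx ?orbT.
  by apply/existsP; exists g; rewrite !inE gne.
suff hcov : forall g, g \in [set: E] :\ e -> exists M, perfect_matching src dst ([set: E] :\ e) M /\ g \in M.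
  by split.
move=> g /setD1P [gne _].
have [M [[_ HM] gM]] := cov g (in_setT g).
case: (boolP (e \in M)) => eM; last first.
  exists M; split=> //; split=> //; apply/subsetP => x xM; rewrite !inE andbT.
  by apply: contraNneq eM => <-.
have fM : f \notin M.
  apply/negP => fM.
  have := HM (src e); move/eqP; rewrite (cardD1 e) (cardD1 f) !inE eM fM fe.
  by rewrite inc_ef /incident eqxx.
pose s := tperm e f.
have inc_s : forall x v, incident src dst (s x) v = incident src dst x v.
  move=> x v; rewrite /s; case: tpermP => [->|->|//]; by rewrite ?inc_ef.
exists (s @: M); split; last first.
  apply/imsetP; exists g => //; rewrite /s tpermD // ?(eq_sym g) //.
  by rewrite eq_sym.
  by apply: contraNneq fM => ->.
split.
  apply/subsetP => x /imsetP [y yM ->]; rewrite !inE andbT /s.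
  case: tpermP => [_|ye|ye _]; first by [].
    by subst y; rewrite yM in fM.
  by apply/eqP.
move=> v.
have -> : [set x in s @: M | incident src dst x v] =
          s @: [set x in M | incident src dst x v].
  apply/setP => x; rewrite !inE; apply/andP/imsetP.
    move=> [/imsetP [y yM ->] hy]; exists y => //; rewrite inE yM /=.
    by rewrite -inc_s.
  move=> [y]; rewrite inE => /andP [yM hy] ->; split; first by apply: imset_f.
  by rewrite inc_s.
by rewrite card_imset ?HM //; apply: perm_inj.
Qed.
End S.

Theorem mainTheorem8 (V E : finType) (src dst : E -> V)
  (loopless : forall e : E, src e != dst e) (h : V) :
  wheel_like src dst [set: E] -> is_hub src dst [set: E] h ->
  forall e : E, multiple_edge src dst [set: E] e -> incident src dst e h.
Proof.
move=> [[_ [mc _]] _] hub e [_ [f _ /andP [fe hpar]]].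
have rem := par_removable mc fe hpar.
have [x] := hub [set e] (or_introl (ex_intro _ e (conj erefl rem))).
by rewrite inE => /eqP ->.
Qed.
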